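(* Let $d,N\in\mathbb{N}$ and let $C:\mathbb{R}^d\times\mathbb{R}^d\to\mathbb{R}$ be smooth with $C(x,x')=C(-x,-x')$ for all $x,x'$. For multi-indices $\alpha,\beta\in\mathbb{N}_0^d$ let $C_{\alpha,\beta}=\partial_{x_1}^{\alpha_1}\cdots\partial_{x_d}^{\alpha_d}\partial_{x'_1}^{\beta_1}\cdots\partial_{x'_d}^{\beta_d}C$. Let $K=\binom{N+d}{N}$ and $R=(C_{\alpha,\beta}(0,0))_{\alpha,\beta\in\mathbb{N}_0^d,\,|\alpha|,|\beta|\le N}\in\mathbb{R}^{K\times K}$, assumed invertible, let $b=R^{-1}(1,0,\dots,0)^T$ (the first coordinate corresponding to $\alpha=0$), and define $\eta(x)=\sum_{|\alpha|\le N}b_\alpha C_{\alpha,0}(0,x)$. Then $\nabla^j\eta(0)=0$ for all odd integers $j\in\mathbb{N}$.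
   Context: $\nabla^j\eta(0)$ denotes the full derivative of order $j$ (all partial derivatives of order $j$) at $0$. *)

(* Defs.v *)
From HB Require Import structures.
From mathcomp Require Import all_boot all_order all_algebra.
From mathcomp Require Import all_classical all_reals all_analysis.
Set Implicit Arguments. Unset Strict Implicit. Unset Printing Implicit Defensive.
Import Order.TTheory GRing.Theory Num.Theory.
Import numFieldNormedType.Exports.
Local Open Scope ring_scope.

Section Defs.
Variable R : realType.

Definition evec (n : nat) (i : 'I_n) : 'rV[R]_n := delta_mx 0 i.

Definition pder (n : nat) (i : 'I_n) (f : 'rV[R]_n -> R) : 'rV[R]_n -> R :=
  fun x => 'D_(evec i) f x.

(* iterated partial derivative along the sequence of coordinates s
   (first element of s applied last) *)
Definition pders (n : nat) (s : seq 'I_n) (f : 'rV[R]_n -> R) : 'rV[R]_n -> R :=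
  foldr (@pder n) f s.

Definition smooth (n : nat) (f : 'rV[R]_n -> R) : Prop :=
  forall s : seq 'I_n,
    continuous (pders s f) /\
    (forall (i : 'I_n) (x : 'rV[R]_n), derivable (pders s f) x (evec i)).

Definition mpder (n : nat) (g : 'I_n -> nat) (f : 'rV[R]_n -> R) : 'rV[R]_n -> R :=
  foldr (fun i h => iter (g i) (pder i) h) f (enum 'I_n).

End Defs.

Definition midx (d N : nat) : predArgType :=
  {a : {ffun 'I_d -> 'I_N.+1} | (\sum_(i < d) (a i : nat) <= N)%N}.

Lemma midx0_proof (d N : nat) :
  (\sum_(i < d) (([ffun => ord0] : {ffun 'I_d -> 'I_N.+1}) i : nat) <= N)%N.
Proof. by rewrite big1 // => i _; rewrite ffunE. Qed.

Definition midx0 (d N : nat) : midx d N := exist (fun a : {ffun 'I_d -> 'I_N.+1} => (\sum_(i < d) (a i : nat) <= N)%N) [ffun => ord0] (midx0_proof d N).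

Definition jidx (d N : nat) (a b : midx d N) : 'I_(d + d) -> nat :=
  fun k => match fintype.split k with inl i => val a i | inr j => val b j end.

(* C_{alpha,beta}, for C given as a function of the concatenated vector (x, x') *)
Definition Cab (R : realType) (d N : nat) (C : 'rV[R]_(d + d) -> R)
  (a b : midx d N) : 'rV[R]_d -> 'rV[R]_d -> R :=
  fun x x' => mpder (jidx a b) C (row_mx x x').

(* the matrix R = (C_{alpha,beta}(0,0)), indexed via enum_rank of midx d N;
   its size #|midx d N| equals binomial(N+d, N) *)
Definition Rmat (R : realType) (d N : nat) (C : 'rV[R]_(d + d) -> R)
  : 'M[R]_#|midx d N| :=
  \matrix_(i, j) Cab C (enum_val i) (enum_val j) 0 0.

Definition bvec (R : realType) (d N : nat) (C : 'rV[R]_(d + d) -> R)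
  : 'cV[R]_#|midx d N| :=
  invmx (Rmat N C) *m delta_mx (enum_rank (midx0 d N)) 0.

Definition etaC (R : realType) (d N : nat) (C : 'rV[R]_(d + d) -> R)
  : 'rV[R]_d -> R :=
  fun x => \sum_(i < #|midx d N|) bvec N C i 0 * Cab C (enum_val i) (midx0 d N) 0 x.

(* Main.v *)
Require Import Defs.
From HB Require Import structures.
From mathcomp Require Import all_boot all_order all_algebra.
From mathcomp Require Import all_classical all_reals all_analysis.
From mathcomp Require Import ring lra.
Import Order.TTheory GRing.Theory Num.Theory.
Import numFieldNormedType.Exports.
Local Open Scope ring_scope.
Local Open Scope classical_set_scope.
Set Implicit Arguments. Unset Strict Implicit.

Lemma oppr_dnbhs0 (R : realType) : (fun h : R => - h) @ 0^' --> (0:R)^'.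
Proof.
move=> A /= /nbhs_normP [e e0 H].
apply/nbhs_normP; exists e => //= y /= hy hy0.
apply: H; rewrite /= ?oppr_eq0 //.
by move: hy; rewrite /= !sub0r !normrN.
Qed.

Lemma derive_negsym (R : realType) n (F : 'rV[R]_n -> R) (s : R) (z e : 'rV[R]_n) :
  (forall y, F y = s * F (- y)) -> derivable F (- z) e ->
  'D_e F z = - s * 'D_e F (- z).
Proof.
move=> HF dF; apply: cvg_lim => //.
set q := (fun h : R => h^-1 *: ((F \o shift (- z)) (h *: e) - F (- z))).
have -> : (fun h : R => h^-1 *: ((F \o shift z) (h *: e) - F z)) = (fun h => - s * q (- h)).
  apply/funext => h; rewrite /q /= (HF (h *: e + z)) (HF z) opprD -scaleNr invrN.
  move: (F _) (F _) => a b.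
  change (h^-1 * (s * b - s * a) = - s * (- h^-1 * (b - a))). ring.
apply: cvgMl_tmp.
have := cvg_comp _ _ (@oppr_dnbhs0 R) dF. by [].
Qed.

Section Aux.
Variable R : realType.

Lemma derive_row0 d (f : 'rV[R]_(d + d) -> R) (x : 'rV[R]_d) (i : 'I_d) :
  ('D_(evec R i) (fun y => f (row_mx 0 y)) x = 'D_(evec R (rshift d i)) f (row_mx 0 x))
  /\ (derivable (fun y => f (row_mx 0 y)) x (evec R i) <->
      derivable f (row_mx 0 x) (evec R (rshift d i))).
Proof.
have E : (fun h : R => h^-1 *: (((fun y => f (row_mx 0 y)) \o shift x) (h *: evec R i)
            - f (row_mx 0 x))) =
         (fun h : R => h^-1 *: ((f \o shift (row_mx 0 x)) (h *: evec R (rshift d i))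
            - f (row_mx 0 x))).
  apply/funext => h /=.
  by rewrite /evec delta_mx_rshift scale_row_mx scaler0 add_row_mx add0r.
by rewrite /derive /derivable E.
Qed.

Definition mseq {n} (g : 'I_n -> nat) (r : seq 'I_n) := flatten [seq nseq (g i) i | i <- r].

Lemma pders_cat n (s t : seq 'I_n) (f : 'rV[R]_n -> R) :
  pders (s ++ t) f = pders s (pders t f).
Proof. by rewrite /pders foldr_cat. Qed.

Lemma pders_nseq n k (i : 'I_n) (f : 'rV[R]_n -> R) :
  pders (nseq k i) f = iter k (pder i) f.
Proof. by elim: k => //= k ->. Qed.

Lemma mpder_pders n (g : 'I_n -> nat) (f : 'rV[R]_n -> R) :
  mpder g f = pders (mseq g (enum 'I_n)) f.
Proof.
rewrite /mpder /mseq; elim: (enum 'I_n) => //= i r IH.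
by rewrite pders_cat pders_nseq IH.
Qed.

Lemma size_mseq n (g : 'I_n -> nat) r : size (mseq g r) = (\sum_(i <- r) g i)%N.
Proof.
elim: r => [|i r IH]; first by rewrite big_nil.
by rewrite big_cons /= size_cat size_nseq -IH.
Qed.

Definition msz {d N} (a : midx d N) := (\sum_(i < d) (val a i : nat))%N.

Lemma msz0 d N : msz (midx0 d N) = 0%N.
Proof. by rewrite /msz big1 // => i _; rewrite ffunE. Qed.

Lemma sum_jidx d N (a b : midx d N) :
  (\sum_(k <- enum 'I_(d + d)) jidx a b k)%N = (msz a + msz b)%N.
Proof.
rewrite big_enum /= big_split_ord /=; congr (_ + _)%N; apply: eq_bigr => k _.
  by rewrite /jidx (unsplitK (inl k : 'I_d + 'I_d)).
by rewrite /jidx (unsplitK (inr k : 'I_d + 'I_d)).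
Qed.

Lemma size_Cab d N (a b : midx d N) :
  size (mseq (jidx a b) (enum 'I_(d + d))) = (msz a + msz b)%N.
Proof. by rewrite size_mseq sum_jidx. Qed.

Lemma pders_sym d (C : 'rV[R]_(d + d) -> R) : smooth C ->
  (forall x x' : 'rV[R]_d, C (row_mx x x') = C (row_mx (- x) (- x'))) ->
  forall u z, pders u C z = (-1) ^+ (size u) * pders u C (- z).
Proof.
move=> sC HC; elim=> [|j u IH] z /=.
  by rewrite expr0 mul1r -(hsubmxK z) HC opp_row_mx.
rewrite /pder (derive_negsym IH); last exact: (sC u).2.
by rewrite exprS mulN1r.
Qed.

Lemma pders_odd d (C : 'rV[R]_(d + d) -> R) : smooth C ->
  (forall x x' : 'rV[R]_d, C (row_mx x x') = C (row_mx (- x) (- x'))) ->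
  forall u, odd (size u) -> pders u C 0 = 0.
Proof.
move=> sC HC u Hu; have := pders_sym sC HC u 0.
rewrite oppr0 -signr_odd Hu expr1 => h; lra.
Qed.

End Aux.

Lemma Rmat_odd (R : realType) d N (C : 'rV[R]_(d + d) -> R) : smooth C ->
  (forall x x' : 'rV[R]_d, C (row_mx x x') = C (row_mx (- x) (- x'))) ->
  forall i j, odd (msz (enum_val i) + msz (enum_val j)) -> Rmat N C i j = 0.
Proof.
move=> sC HC i j H; rewrite /Rmat mxE /Cab mpder_pders row_mx0.
by apply: pders_odd => //; rewrite size_Cab.
Qed.

Lemma bvec_odd (R : realType) d N (C : 'rV[R]_(d + d) -> R) : smooth C ->
  (forall x x' : 'rV[R]_d, C (row_mx x x') = C (row_mx (- x) (- x'))) ->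
  Rmat N C \in unitmx ->
  forall i, odd (msz (enum_val i)) -> bvec N C i 0 = 0.
Proof.
move=> sC HC U.
pose sg := fun i : 'I_#|midx d N| => (-1) ^+ msz (enum_val i) : R.
have Rsym : forall i j, Rmat N C i j * sg j = sg i * Rmat N C i j.
  move=> i j; case: (boolP (odd (msz (enum_val i) + msz (enum_val j)))) => H.
    by rewrite Rmat_odd // mulr0 mul0r.
  have Hp : odd (msz (enum_val i)) = odd (msz (enum_val j)).
    by move: H; rewrite oddD; case: (odd _); case: (odd _).
  by rewrite /sg -signr_odd -(signr_odd _ (msz (enum_val i))) Hp mulrC.
have Mb : Rmat N C *m bvec N C = delta_mx (enum_rank (midx0 d N)) 0.
  by rewrite /bvec mulmxA mulmxV // mul1mx.
pose b' := \col_i (sg i * bvec N C i 0).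
have Mb' : Rmat N C *m b' = delta_mx (enum_rank (midx0 d N)) 0.
  apply/matrixP => i k; rewrite (ord1 k).
  transitivity (sg i * (Rmat N C *m bvec N C) i 0).
    rewrite mxE [in RHS]mxE big_distrr /=; apply: eq_bigr => j _.
    by rewrite [b' j 0]mxE mulrA Rsym mulrA.
  rewrite Mb; case: (eqVneq i (enum_rank (midx0 d N))) => [->|ne].
    by rewrite /sg enum_rankK msz0 expr0 mul1r.
  by rewrite !mxE (negbTE ne) /= mulr0.
have Hb : b' = bvec N C by rewrite /bvec -Mb' mulKmx.
move=> i Ho; have : b' i 0 = bvec N C i 0 by rewrite Hb.
rewrite /= mxE /sg -signr_odd Ho expr1 => h; lra.
Qed.

Lemma pders_sum (R : realType) d (C : 'rV[R]_(d + d) -> R) : smooth C ->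
  forall n (c : 'I_n -> R) (u : 'I_n -> seq 'I_(d + d)) (s : seq 'I_d),
  pders s (fun x => \sum_(i < n) c i * pders (u i) C (row_mx 0 x)) =
  (fun x => \sum_(i < n) c i * pders (map (@rshift d d) s ++ u i) C (row_mx 0 x)).
Proof.
move=> sC n c u; elim=> [|j s IH] //=.
rewrite IH; apply/funext => x; rewrite /pder.
pose G i := fun y : 'rV[R]_d => pders (map (@rshift d d) s ++ u i) C (row_mx 0 y).
have -> : (fun y => \sum_(i < n) c i * pders (map (@rshift d d) s ++ u i) C (row_mx 0 y))
   = \sum_(i < n) (c i \*: G i) by rewrite fct_sumE.
have dG : forall i, derivable (G i) x (evec R j).
  by move=> i; apply/(derive_row0 _ x j).2; exact: (sC _).2.
rewrite derive_sum; last by move=> i; apply: derivableZ.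
apply: eq_bigr => i _; rewrite deriveZ //.
by rewrite (derive_row0 _ x j).1.
Qed.

Theorem mainTheorem5 (R : realType) (d N : nat) (C : 'rV[R]_(d + d) -> R) :
  smooth C ->
  (forall x x' : 'rV[R]_d, C (row_mx x x') = C (row_mx (- x) (- x'))) ->
  Rmat N C \in unitmx ->
  forall s : seq 'I_d, odd (size s) -> pders s (etaC N C) 0 = 0.
Proof.
move=> sC HC U s Hs.
have -> : etaC N C = fun x => \sum_(i < #|midx d N|) bvec N C i 0 *
   pders (mseq (jidx (enum_val i) (midx0 d N)) (enum 'I_(d + d))) C (row_mx 0 x).
  by apply/funext => x; rewrite /etaC; apply: eq_bigr => i _; rewrite /Cab mpder_pders.
rewrite pders_sum // row_mx0; apply: big1 => i _.
case: (boolP (odd (msz (enum_val i)))) => Ho.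
  by rewrite (bvec_odd sC HC U Ho) mul0r.
rewrite pders_odd ?mulr0 //.
by rewrite size_cat size_map size_Cab msz0 addn0 oddD Hs (negbTE Ho).
Qed.
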